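(* For every prime power $q$ and every integer $h\geq 2$, there exists a $2$-fold blocking set of size $2(q^h+q^{h-1}+1)$ in $\mathrm{PG}(2,q^h)$.
   Context: A $2$-fold blocking set is a point set meeting every line in at least $2$ points. *)

(* Defs.v *)
(* The projective plane PG(2,F) over a finite field F,
   modelled via the row-space theory of mxalgebra: a point is a
   1-dimensional subspace of F^3, a line a 2-dimensional subspace,
   each represented canonically by its generated matrix <<A>>%MS. *)
From HB Require Import structures.
From mathcomp Require Import all_boot all_order all_algebra.
Set Implicit Arguments. Unset Strict Implicit. Unset Printing Implicit Defensive.
Import GRing.Theory.
Local Open Scope ring_scope.

Definition is_prime_power (q : nat) : Prop :=
  exists p k : nat, prime p /\ (0 < k)%N /\ q = (p ^ k)%N.

Definition PG2_points (F : finFieldType) : {set 'M[F]_3} :=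
  [set <<A>>%MS | A : 'M[F]_3 & \rank A == 1%N].

Definition PG2_lines (F : finFieldType) : {set 'M[F]_3} :=
  [set <<A>>%MS | A : 'M[F]_3 & \rank A == 2%N].

Definition PG2_incident (F : finFieldType) (P L : 'M[F]_3) : bool :=
  (P <= L)%MS.

Definition t_fold_blocking_set (F : finFieldType) (t : nat) (B : {set 'M[F]_3}) : Prop :=
  B \subset PG2_points F /\
  forall L, L \in PG2_lines F -> (t <= #|[set P in B | PG2_incident P L]|)%N.

(* Main.v *)
Require Import Defs.
From mathcomp Require Import all_boot all_order all_algebra all_field.
From mathcomp Require Import ring zify.
Set Implicit Arguments. Unset Strict Implicit. Unset Printing Implicit Defensive.
Import GRing.Theory.
Local Open Scope ring_scope.

Section Geom.
Variable F : finFieldType.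

Definition rv (a b c : F) : 'rV[F]_3 := \row_(j < 3) nth 0 [:: a; b; c] j.

Lemma rvE0 a b c : rv a b c 0 0 = a. Proof. by rewrite mxE. Qed.
Lemma rvE1 a b c : rv a b c 0 1 = b. Proof. by rewrite mxE. Qed.
Lemma rvE2 a b c : rv a b c 0 2%:R = c. Proof. by rewrite mxE. Qed.

Lemma rvP a b c a' b' c' : rv a b c = rv a' b' c' -> [/\ a = a', b = b' & c = c'].
Proof.
move=> E; split.
- by rewrite -(rvE0 a b c) E rvE0.
- by rewrite -(rvE1 a b c) E rvE1.
- by rewrite -(rvE2 a b c) E rvE2.
Qed.

Lemma rvZ s a b c : s *: rv a b c = rv (s * a) (s * b) (s * c).
Proof. by apply/rowP => j; rewrite !mxE; case: j => [[|[|[|]]]]. Qed.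

Lemma rvB a b c a' b' c' : rv a b c - rv a' b' c' = rv (a - a') (b - b') (c - c').
Proof. by apply/rowP => j; rewrite !mxE; case: j => [[|[|[|]]]]. Qed.

Lemma rv0 : rv 0 0 0 = 0.
Proof. by apply/rowP => j; rewrite !mxE; case: j => [[|[|[|]]]]. Qed.

Lemma rv_eq0 a b c : rv a b c = 0 -> [/\ a = 0, b = 0 & c = 0].
Proof. by rewrite -rv0 => /rvP. Qed.

Lemma pt_in (v : 'rV[F]_3) : v != 0 -> <<v>>%MS \in PG2_points F.
Proof.
move=> v0; pose A : 'M[F]_3 := \matrix_(i, j) v 0 j.
have rA : forall i, row i A = v by move=> i; apply/rowP => j; rewrite !mxE.
have eAv : (A == v)%MS.
  apply/andP; split.
    by apply/row_subP => i; rewrite rA submx_refl.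
  by rewrite -(rA 0) row_sub.
apply/imsetP; exists A.
  by rewrite inE (eqmx_rank eAv) rank_rV v0.
by apply/esym/genmxP.
Qed.

Lemma pt_scale a (v : 'rV[F]_3) : a != 0 -> <<a *: v>>%MS = <<v>>%MS.
Proof. by move=> a0; apply: eq_genmx; apply: eqmx_scale. Qed.

Lemma pt_eq (u v : 'rV[F]_3) : <<u>>%MS = <<v>>%MS -> exists a, u = a *: v.
Proof.
move=> E; have : (u == v)%MS by apply/genmxP.
by move=> /andP [uv _]; apply/sub_rVP.
Qed.

Lemma pt_le (v : 'rV[F]_3) (L : 'M[F]_3) : (v <= L)%MS -> PG2_incident <<v>>%MS L.
Proof. by rewrite /PG2_incident genmxE. Qed.

Lemma line_coker (L : 'M[F]_3) : L \in PG2_lines F ->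
  exists C : 'M[F]_3, exists i j, [/\ C i j != 0,
    forall w : 'rV[F]_3, (w *m C == 0) = (w <= L)%MS &
    forall w : 'rV[F]_3, exists a, w *m C = a *: row i C].
Proof.
case/imsetP => A; rewrite inE => /eqP rA ->.
set L' := <<A>>%MS.
have rC : \rank (cokermx L') = 1%N by rewrite mxrank_coker /L' mxrank_gen rA.
have C0 : cokermx L' != 0 by rewrite -mxrank_eq0 rC.
have [i [j Cij]] : exists i j, cokermx L' i j != 0.
  case: (boolP [exists i, exists j, cokermx L' i j != 0]) =>
    [/existsP [i /existsP [j Hij]]|Hn]; first by exists i, j.
  exfalso; move/negP: C0; apply; apply/eqP/matrixP => i j.
  move/existsPn: Hn => /(_ i) /existsPn /(_ j); rewrite negbK => /eqP ->.
  by rewrite mxE.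
exists (cokermx L'), i, j; split => //.
  by move=> w; rewrite submxE.
have r0 : row i (cokermx L') != 0.
  apply/negP => /eqP E; move: Cij.
  have -> : cokermx L' i j = row i (cokermx L') 0 j by rewrite [RHS]mxE.
  by rewrite E [X in X != 0]mxE eqxx.
have sub : (cokermx L' <= row i (cokermx L'))%MS.
  have := mxrank_leqif_sup (row_sub i (cokermx L')).
  by move=> [_ <-]; rewrite rank_rV r0 rC.
move=> w; apply/sub_rVP; exact: submx_trans (submxMl _ _) sub.
Qed.

Lemma block_gen (V : F -> F -> 'rV[F]_3) (K : pred F) :
  (forall x1 t1 x2 t2, V x1 t1 - V x2 t2 = V (x1 - x2) (t1 - t2)) ->
  (forall x t, V x t = 0 -> x = 0 /\ t = 0) ->
  (forall b b' : bool, K (b%:R - b'%:R)) ->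
  forall L, L \in PG2_lines F -> exists x t, [/\ K t, V x t != 0 & (V x t <= L)%MS].
Proof.
move=> VB V0 KB L /line_coker [C [i [j [Cij HC Ha]]]].
pose g : F * bool -> F := fun p => (V p.1 (p.2)%:R *m C) 0 j.
have [p1 [p2 [ne eg]]] : exists p1 p2, p1 != p2 /\ g p1 = g p2.
  case: (boolP [exists p1, exists p2, (p1 != p2) && (g p1 == g p2)]) =>
    [/existsP [p1 /existsP [p2 /andP [ne /eqP eg]]]|Hn]; first by exists p1, p2.
  exfalso.
  have inj : injective g.
    move=> p1 p2 e; apply/eqP; move/existsPn: Hn => /(_ p1) /existsPn /(_ p2).
    by rewrite e eqxx andbT negbK.
  have := leq_card g inj; rewrite card_prod card_bool.
  have : (0 < #|F|)%N by apply/card_gt0P; exists 0.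
  move: #|F| => n h1; rewrite leqNgt; move/negP; apply.
  by rewrite muln2 -addnn -{1}(addn0 n) ltn_add2l.
case: p1 p2 ne eg => [x1 b1] [x2 b2] ne eg.
have [a1 E1] := Ha (V x1 b1%:R); have [a2 E2] := Ha (V x2 b2%:R).
have ea : a1 = a2.
  move: eg; rewrite /g /= E1 E2 !mxE => /mulIf; apply; exact: Cij.
exists (x1 - x2), (b1%:R - b2%:R); split.
- exact: KB.
- apply/negP => /eqP /V0 [/eqP ex /eqP eb].
  rewrite subr_eq0 in ex; rewrite subr_eq0 in eb.
  move: ne eb; rewrite (eqP ex); clear E1 E2 eg ea.
  case: b1; case: b2 => //=; rewrite ?eqxx ?oner_eq0 //.
  by move=> _; rewrite eq_sym oner_eq0.
- by rewrite -HC -VB mulmxBl E1 E2 ea subrr.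
Qed.

Lemma rv1_neq0 a b : rv a b 1 != 0.
Proof. by apply/negP => /eqP /rv_eq0 [_ _ /eqP]; rewrite oner_eq0. Qed.

Lemma card_points : (#|F| * #|F| <= #|PG2_points F|)%N.
Proof.
pose f (p : F * F) := <<rv p.1 p.2 1>>%MS.
have inj : injective f.
  move=> [a b] [a' b'] /pt_eq [l]; rewrite rvZ /= => /rvP [e1 e2 e3].
  by rewrite mulr1 in e3; rewrite e1 e2 -e3 !mul1r.
rewrite -card_prod -cardsT -(card_imset _ inj).
apply: subset_leq_card; apply/subsetP => P /imsetP [p _ ->]; exact: pt_in (rv1_neq0 _ _).
Qed.

End Geom.

Lemma pad_aux (T : finType) (C : {set T}) d : forall A : {set T},
  A \subset C -> (#|A| + d <= #|C|)%N ->
  exists B : {set T}, [/\ A \subset B, B \subset C & #|B| = (#|A| + d)%N].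
Proof.
elim: d => [|d IH] A AC Hc.
  by exists A; split; rewrite ?addn0.
have : (0 < #|C :\: A|)%N by rewrite cardsD (setIidPr AC) subn_gt0; lia.
case/card_gt0P => x; rewrite in_setD => /andP [xA xC].
have AC' : x |: A \subset C by rewrite subUset sub1set xC AC.
have cx : #|x |: A| = #|A|.+1 by rewrite cardsU1 xA.
have [|B [AB BC cB]] := IH (x |: A) AC'; first by rewrite cx; lia.
exists B; split => //; first by apply: subset_trans AB; apply: subsetUr.
by rewrite cB cx addSnnS.
Qed.

Lemma pad (T : finType) (A C : {set T}) n :
  A \subset C -> (#|A| <= n)%N -> (n <= #|C|)%N ->
  exists B : {set T}, [/\ A \subset B, B \subset C & #|B| = n].
Proof.
move=> AC An nC; have [|B [AB BC cB]] := @pad_aux T C (n - #|A|) A AC; first by lia.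
by exists B; split => //; rewrite cB; lia.
Qed.

Section Tr.
Variables (F : finFieldType) (q h : nat).
Hypothesis frobD : forall (x y : F) i, (x + y) ^+ (q ^ i) = x ^+ (q ^ i) + y ^+ (q ^ i).
Hypothesis cardF : #|F| = (q ^ h)%N.
Hypothesis q2 : (2 <= q)%N.
Hypothesis h2 : (2 <= h)%N.

Definition inK (x : F) := x ^+ q == x.
Definition T (x : F) : F := \sum_(i < h) x ^+ (q ^ i).

Lemma qi_gt0 i : (0 < q ^ i)%N.
Proof. by rewrite expn_gt0; case: q q2. Qed.

Lemma frob0 i : (0 : F) ^+ (q ^ i) = 0.
Proof. by rewrite expr0n; case: (q ^ i)%N (qi_gt0 i). Qed.

Lemma frobN (x : F) i : (- x) ^+ (q ^ i) = - x ^+ (q ^ i).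
Proof.
apply/eqP; rewrite -subr_eq0 opprK -frobD addNr frob0 //.
Qed.

Lemma TD x y : T (x + y) = T x + T y.
Proof. by rewrite /T -big_split; apply: eq_bigr => i _; rewrite frobD. Qed.

Lemma T0 : T 0 = 0.
Proof. by rewrite /T big1 // => i _; rewrite frob0. Qed.

Lemma TN x : T (- x) = - T x.
Proof. by rewrite /T -sumrN; apply: eq_bigr => i _; rewrite frobN. Qed.

Lemma TB x y : T (x - y) = T x - T y.
Proof. by rewrite TD TN. Qed.

Lemma inK_pow k i : inK k -> k ^+ (q ^ i) = k.
Proof.
move=> /eqP kK; elim: i => [|i IH]; first by rewrite expn0 expr1.
by rewrite expnSr exprM IH kK.
Qed.

Lemma TZ k x : inK k -> T (k * x) = k * T x.
Proof.
move=> kK; rewrite /T mulr_sumr; apply: eq_bigr => i _.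
by rewrite exprMn (inK_pow i kK).
Qed.

Lemma inK0 : inK 0.
Proof. by rewrite /inK expr0n (_ : (q == 0%N) = false) //; apply/negbTE; rewrite -lt0n; apply: leq_trans q2. Qed.
Lemma inK1 : inK 1. Proof. by rewrite /inK expr1n. Qed.
Lemma inKD a b : inK a -> inK b -> inK (a + b).
Proof.
rewrite /inK => /eqP ha /eqP hb; have := frobD a b 1; rewrite expn1 => ->.
by rewrite ha hb.
Qed.
Lemma inKN a : inK a -> inK (- a).
Proof. by rewrite /inK => /eqP ha; have := frobN a 1; rewrite expn1 => ->; rewrite ha. Qed.
Lemma inKB a b : inK a -> inK b -> inK (a - b).
Proof. by move=> ha hb; apply: inKD => //; apply: inKN. Qed.
Lemma inKM a b : inK a -> inK b -> inK (a * b).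
Proof. by rewrite /inK => /eqP ha /eqP hb; rewrite exprMn ha hb. Qed.
Lemma inKV a : inK a -> inK (a ^-1).
Proof. by rewrite /inK => /eqP ha; rewrite exprVn ha. Qed.

Lemma frob_sum (I : finType) (f : I -> F) :
  (\sum_i f i) ^+ q = \sum_i (f i) ^+ q.
Proof.
have fD : forall x y : F, (x + y) ^+ q = x ^+ q + y ^+ q.
  by move=> x y; have := frobD x y 1; rewrite expn1.
have f0 : (0 : F) ^+ q = 0 by have := frob0 1; rewrite expn1.
exact: (big_morph (fun x : F => x ^+ q) fD f0).
Qed.

Lemma inKT x : inK (T x).
Proof.
rewrite /inK /T frob_sum.
have -> : \sum_(i < h) (x ^+ (q ^ i)) ^+ q = \sum_(i < h) x ^+ (q ^ i.+1).
  by apply: eq_bigr => i _; rewrite -exprM expnSr.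
have [h' hh'] : exists h', h = h'.+1 by exists h.-1; case: (h) h2.
move: cardF; rewrite hh' => cF.
rewrite big_ord_recr big_ord_recl /=.
have -> : x ^+ (q ^ h'.+1) = x by rewrite -cF expf_card.
rewrite expn0 expr1 addrC; apply/eqP; congr (_ + _); apply: eq_bigr => i _ //.
Qed.


Lemma hornerPT x : (\sum_(i < h) 'X^(q ^ i) : {poly F}).[x] = T x.
Proof. by rewrite horner_sum; apply: eq_bigr => i _; rewrite hornerXn. Qed.

Lemma size_PT n : size (\sum_(i < n.+1) 'X^(q ^ i) : {poly F}) = (q ^ n).+1.
Proof.
elim: n => [|n IH]; first by rewrite big_ord1 size_polyXn.
rewrite big_ord_recr /= addrC size_addl size_polyXn // IH ltnS ltn_exp2l //.
Qed.

Lemma size_PT' n : (0 < n)%N ->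
  size (\sum_(i < n) 'X^(q ^ i) : {poly F}) = (q ^ n.-1).+1.
Proof. by case: n => // n _; exact: size_PT. Qed.

Definition kerset := [set x : F | T x == 0].
Definition Kset := [set x : F | inK x].

Lemma card_kerset : (#|kerset| <= q ^ h.-1)%N.
Proof.
have h0 : (0 < h)%N by apply: leq_trans h2.
have := @max_poly_roots _ (\sum_(i < h) 'X^(q ^ i)) (enum kerset).
rewrite -cardE size_PT' // ltnS; apply.
- by rewrite -size_poly_eq0 size_PT'.
- apply/allP => x; rewrite mem_enum inE => /eqP Tx.
  by rewrite /root hornerPT Tx.
- exact: enum_uniq.
Qed.

Lemma card_Kset : (#|Kset| <= q)%N.
Proof.
have sz : size ('X^q - 'X : {poly F}) = q.+1.
  by rewrite size_addl size_polyXn // size_opp size_polyX ltnS.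
have := @max_poly_roots _ ('X^q - 'X) (enum Kset).
rewrite -cardE sz ltnS; apply.
- by rewrite -size_poly_eq0 sz.
- apply/allP => x; rewrite mem_enum inE => /eqP Kx.
  by rewrite /root !hornerE Kx subrr.
- exact: enum_uniq.
Qed.


Lemma exists_y0 : exists y0, T y0 = 1.
Proof.
have : ~~ [forall x, T x == 0].
  apply/negP => /forallP H.
  have E : kerset = setT by apply/setP => x; rewrite !inE H.
  have := card_kerset; rewrite E cardsT cardF leqNgt ltn_exp2l //.
  by rewrite ltn_predL (leq_trans _ h2).
move/forallPn => [x Hx]; exists ((T x)^-1 * x).
by rewrite TZ ?mulVf //; apply: inKV; apply: inKT.
Qed.

Lemma exists_a : exists a, a != 0 /\ T a = 0.
Proof.
case: (boolP [exists a, (a != 0) && (T a == 0)]) => [/existsP [a /andP [a0 /eqP Ta]]|Hn].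
  by exists a.
exfalso.
have inj : injective T.
  move=> x y Exy; apply/eqP; rewrite -subr_eq0.
  move/existsPn: Hn => /(_ (x - y)); rewrite TB Exy subrr eqxx andbT.
  by rewrite negbK.
have sub : T @: setT \subset Kset.
  by apply/subsetP => z /imsetP [x _ ->]; rewrite inE inKT.
have := subset_leq_card sub; rewrite card_imset // cardsT cardF => Hle.
have := leq_trans Hle card_Kset.
rewrite leqNgt; move/negP; apply.
by rewrite -{1}(expn1 q) ltn_exp2l.
Qed.

Lemma card_Tfib c : (#|[set y | T y == c]| <= #|kerset|)%N.
Proof.
case: (pickP (fun y => T y == c)) => [y0 Hy0|none]; last first.
  by rewrite (_ : [set y | T y == c] = set0) ?cards0 //; apply/setP => y; rewrite !inE none.
have inj : injective (fun y : F => y - y0) by move=> x y /addIr.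
rewrite -(card_imset _ inj); apply: subset_leq_card; apply/subsetP => z.
move/imsetP => [y]; rewrite inE => /eqP Ty ->.
by rewrite inE TB Ty (eqP Hy0) subrr.
Qed.

Lemma stabK mu : (forall y, T y = 0 -> T (mu * y) = 0) -> inK mu.
Proof.
move=> H; have [y0 Ty0] := exists_y0; set kap := T (mu * y0).
have kK : inK kap by apply: inKT.
have E : forall y, T (mu * y) = kap * T y.
  move=> y; have : T (y - T y * y0) = 0 by rewrite TB TZ ?inKT // Ty0 mulr1 subrr.
  move/H; rewrite mulrBr TB mulrCA (TZ (mu * y0) (inKT y)) => /eqP; rewrite subr_eq0 => /eqP ->.
  by rewrite mulrC.
suff -> : mu = kap by [].
apply/eqP; rewrite -subr_eq0; apply/negP => nz.
have : T ((mu - kap) * ((mu - kap)^-1 * y0)) = 0.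
  by rewrite mulrBl TB E (TZ _ kK) subrr.
by move/negP: nz => nz; rewrite mulVKf // Ty0; apply/eqP; rewrite oner_eq0.
Qed.

Lemma card_bigcup_le (I : finType) (A : {pred I}) (H : I -> {set F}) :
  (#|\bigcup_(i in A) H i| <= \sum_(i in A) #|H i|)%N.
Proof.
apply: (big_rec2 (fun (U : {set F}) n => #|U| <= n)%N); first by rewrite cards0.
move=> i U n _ IH; apply: leq_trans (leq_card_setU _ _) _.
by rewrite leq_add2l.
Qed.

Lemma exists_beta (al rho : F) : al != 0 -> ~~ inK rho ->
  exists be, forall k, inK k -> T (be * (al / (rho - k))) != -1 - k.
Proof.
move=> al0 rK.
pose c k := al / (rho - k).
have rk0 : forall k, inK k -> rho - k != 0.
  move=> k kK; rewrite subr_eq0; apply/negP => /eqP E; by move: rK; rewrite E kK.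
have ck0 : forall k, inK k -> c k != 0.
  by move=> k kK; rewrite /c mulf_neq0 // invr_eq0 rk0.
have Km1 : inK (-1) by apply: inKN; apply: inK1.
pose H k := [set b | T (b * c k) == -1 - k].
have cardH : forall k, inK k -> (#|H k| <= q ^ h.-1)%N.
  move=> k kK; apply: leq_trans (card_kerset).
  apply: leq_trans (card_Tfib (-1 - k)).
  have inj : injective (fun b => b * c k) by apply: mulIf; exact: ck0.
  rewrite -(card_imset (H k) inj); apply: subset_leq_card; apply/subsetP => z.
  by move/imsetP => [b]; rewrite !inE => Hb ->.
have key : exists b, T (b * c (-1)) = 0 /\ T (b * c 0) = -1.
  case: (boolP [exists b, (T (b * c (-1)) == 0) && (T (b * c 0) == -1)]) =>
     [/existsP [b /andP [/eqP e1 /eqP e2]]|Hn]; first by exists b.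
  exfalso.
  have H0 : forall b, T (b * c (-1)) = 0 -> T (b * c 0) = 0.
    move=> b e1; apply/eqP; apply/negP => ne.
    have eK : inK (- (T (b * c 0))^-1) by apply: inKN; apply: inKV; apply: inKT.
    move/existsPn: Hn => /(_ ((- (T (b * c 0))^-1) * b)).
    rewrite -!mulrA !(TZ _ eK) e1 mulr0 eqxx /= mulNr mulVf ?eqxx //.
    by apply/negP.
  have stab : inK (c 0 / c (-1)).
    apply: stabK => y Ty.
    have := H0 (y / c (-1)); rewrite (divfK (ck0 _ Km1)) => /(_ Ty).
    by have -> : c 0 / c (-1) * y = y / c (-1) * c 0 by rewrite mulrC mulrA mulrAC.
  have r0 : rho != 0 by have := rk0 0 inK0; rewrite subr0.
  have r1 := rk0 (-1) Km1.
  have E : c 0 / c (-1) = 1 + rho^-1.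
    by rewrite /c; field; move: r1; rewrite opprK => ->; rewrite r0 al0.
  move: stab; rewrite E => st.
  have : inK (rho^-1) by have := inKB st inK1; rewrite addrC addKr.
  by move/inKV; rewrite invrK (negbTE rK).
have [b0 [e1 e2]] := key.
case: (boolP [exists b, [forall k in Kset, T (b * c k) != -1 - k]]) =>
   [/existsP [b /forall_inP Hb]|Hn].
  by exists b => k kK; apply: Hb; rewrite inE.
exfalso.
set A := Kset :\: [set -1; 0].
have cover : [set: F] \subset (H (-1) :|: H 0) :|: \bigcup_(k in A) H k.
  apply/subsetP => b _.
  move/existsPn: Hn => /(_ b) /forall_inPn [k]; rewrite inE => kK; rewrite negbK => Ek.
  have bH : b \in H k by rewrite inE.
  case: (boolP (k \in [set -1; 0])) => [|kn].
    case/set2P => e; apply/setUP; left; apply/setUP; [left|right]; by rewrite -e.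
  apply/setUP; right; apply/bigcupP; exists k => //.
  by rewrite in_setD kn inE kK.
have c1 := leq_trans (subset_leq_card cover) (leq_card_setU _ _).
rewrite cardsT cardsU in c1.
have I1 : (0 < #|H (-1)%R :&: H 0%R|)%N.
  by apply/card_gt0P; exists b0; rewrite !inE e1 e2 subrr subr0 !eqxx.
have sumb : (#|\bigcup_(k in A) H k| <= #|A| * q ^ h.-1)%N.
  apply: leq_trans (card_bigcup_le _ _) _.
  rewrite -sum_nat_const; apply: leq_sum => k; rewrite in_setD inE => /andP [_ kK].
  by apply: cardH; move: kK; rewrite inE.
have cA : (#|A| + 2 <= q)%N.
  have sub2 : [set -1; 0] \subset Kset.
    by apply/subsetP => x; rewrite !inE => /orP [] /eqP ->; [apply: Km1 | apply: inK0].
  rewrite /A cardsD (setIidPr sub2) cards2.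
  have n10 : (-1 : F) != 0 by rewrite oppr_eq0 oner_eq0.
  rewrite n10 /=; have := card_Kset; have := subset_leq_card sub2; rewrite cards2 n10 /=.
  lia.
have hA := cardH _ Km1; have hB := cardH _ inK0.
have Qm : (q ^ h = q * q ^ h.-1)%N.
  by rewrite -expnS prednK // (leq_trans _ h2).
rewrite cardF Qm in c1.
set m := (q ^ h.-1)%N in c1 hA hB sumb Qm.
have m1 : (0 < m)%N by rewrite /m expn_gt0 (leq_trans _ q2).
have : (#|A| * m + 2 * m <= q * m)%N by rewrite -mulnDl leq_mul2r cA orbT.
move: c1 hA hB sumb I1; clearbody m.
move: (#|H (-1)|) (#|H 0|) (#|H (-1) :&: H 0|) (#|\bigcup_(k in A) H k|) (q * m)%N (#|A| * m)%N => a b i u Q Am.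
lia.
Qed.


Section Params.
Variables (al rho be : F).
Hypothesis al0 : al != 0.
Hypothesis Tal : T (al^-1) = 0.
Hypothesis Trho : T (rho / al) = 1.
Hypothesis Hbe : forall k, inK k -> T (be * (al / (rho - k))) != -1 - k.

Lemma rK : ~~ inK rho.
Proof.
apply/negP => rK.
have : T (rho / al) = rho * T al^-1 by rewrite TZ.
by rewrite Tal mulr0 Trho => /eqP; rewrite oner_eq0.
Qed.

Lemma rk0 k : inK k -> k - rho != 0.
Proof.
move=> kK; rewrite subr_eq0; apply/negP => /eqP E; have := rK; by rewrite -E kK.
Qed.

Lemma rho0 : rho != 0.
Proof. by have := rk0 inK0; rewrite sub0r oppr_eq0. Qed.

Definition G z := rho * z + al * T (be * z).

Lemma GB x y : G (x - y) = G x - G y.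
Proof. rewrite /G !mulrBr TB; ring. Qed.

Lemma G0 : G 0 = 0.
Proof. by have := GB 0 0; rewrite subrr => ->; rewrite subrr. Qed.

Lemma GZ k z : inK k -> G (k * z) = k * G z.
Proof. by move=> kK; rewrite /G [be * _]mulrCA (TZ _ kK); ring. Qed.

Lemma G_inj z : G z = 0 -> z = 0.
Proof.
move=> Gz; case: (eqVneq z 0) => // z0; exfalso.
rewrite /G in Gz; set j := T (be * z) in Gz.
have jdef : j = T (be * z) by [].
clearbody j.
have jK : inK j by rewrite jdef; apply: inKT.
have Hb0 := Hbe inK0; rewrite subr0 in Hb0.
have Ez : rho * z = - (al * j) by apply/eqP; rewrite -subr_eq0 opprK Gz.
have j0 : j != 0.
  apply/negP => /eqP j0; move: Ez; rewrite j0 mulr0 oppr0 => /eqP.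
  by rewrite mulf_eq0 (negbTE rho0) (negbTE z0).
have zE : z = - (al * j) / rho by rewrite -Ez; field; rewrite rho0.
have e : be * z = (- j) * (be * (al / rho)) by rewrite {1}zE; field; rewrite rho0.
have : j = (- j) * T (be * (al / rho)) by rewrite -(TZ _ (inKN jK)) -e jdef.
move=> E'.
have : j * (1 + T (be * (al / rho))) = 0 by rewrite mulrDr mulr1 {1}E'; ring.
move/eqP; rewrite mulf_eq0 (negbTE j0) /= => /eqP E.
have th : T (be * (al / rho)) = -1 by apply/eqP; rewrite -addr_eq0 addrC E.
by move: Hb0; rewrite th subr0 eqxx.
Qed.

Lemma core w : w != 0 -> G w + al = w * T (w^-1) -> False.
Proof.
move=> w0 Ew; rewrite /G in Ew.
set k := T w^-1 in Ew; set j := T (be * w) in Ew.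
have kdef : k = T w^-1 by [].
have jdef : j = T (be * w) by [].
clearbody k j.
have kK : inK k by rewrite kdef; apply: inKT.
have jK : inK j by rewrite jdef; apply: inKT.
have kr := rk0 kK.
have Ew' : w * (k - rho) = al * (1 + j) by rewrite mulrBr -Ew; ring.
have j1 : 1 + j != 0.
  apply/negP => /eqP j1; move: Ew'; rewrite j1 mulr0 => /eqP.
  by rewrite mulf_eq0 (negbTE w0) (negbTE kr).
have wE : w = al * (1 + j) / (k - rho) by rewrite -Ew'; field; rewrite kr.
have kE : k = - (1 + j)^-1.
  have e : w^-1 = (1 + j)^-1 * (k * al^-1 - rho / al).
    by rewrite wE; field; rewrite al0 j1 kr.
  have inv1 : inK (1 + j)^-1 by apply: inKV; apply: inKD => //; apply: inK1.
  rewrite {1}kdef e (TZ _ inv1) TB (TZ _ kK) Tal Trho; ring.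
have rk : rho - k != 0 by rewrite -oppr_eq0 opprB.
set th := T (be * (al / (rho - k))).
have jE : j = (1 + j) * (- th).
  have e : be * w = (1 + j) * (- (be * (al / (rho - k)))).
    by rewrite wE; field; rewrite kr rk.
  rewrite {1}jdef e TZ; last by apply: inKD => //; apply: inK1.
  by rewrite TN.
have : th = -1 - k.
  have thE : th = - j / (1 + j) by rewrite {1}jE; field; rewrite j1.
  by rewrite kE thE; field; rewrite j1.
by move/eqP; rewrite (negbTE (Hbe kK)).
Qed.

Definition V1 x t := rv x (T x) t.
Definition V2 z t := rv t (G z + al * t) z.

Lemma V1B x1 t1 x2 t2 : V1 x1 t1 - V1 x2 t2 = V1 (x1 - x2) (t1 - t2).
Proof. by rewrite /V1 rvB TB. Qed.

Lemma V2B x1 t1 x2 t2 : V2 x1 t1 - V2 x2 t2 = V2 (x1 - x2) (t1 - t2).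
Proof. rewrite /V2 rvB GB; congr rv; ring. Qed.

Lemma V1_0 x t : V1 x t = 0 -> x = 0 /\ t = 0.
Proof. by move/rv_eq0 => [-> _ ->]. Qed.

Lemma V2_0 z t : V2 z t = 0 -> z = 0 /\ t = 0.
Proof. by move/rv_eq0 => [-> _ ->]. Qed.

Lemma KB (b b' : bool) : inK (b%:R - b'%:R).
Proof. by apply: inKB; case: (b) (b') => [] [] /=; rewrite ?inK0 ?inK1. Qed.

Definition Bset (V : F -> F -> 'rV[F]_3) : {set 'M[F]_3} :=
  [set <<V p.1 p.2>>%MS | p : F * F & inK p.2 && (V p.1 p.2 != 0)].

Lemma Bset_sub V : Bset V \subset PG2_points F.
Proof.
apply/subsetP => P /imsetP [p]; rewrite inE => /andP [_ nz] ->; exact: pt_in.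
Qed.

Lemma Bset_block V :
  (forall x1 t1 x2 t2, V x1 t1 - V x2 t2 = V (x1 - x2) (t1 - t2)) ->
  (forall x t, V x t = 0 -> x = 0 /\ t = 0) ->
  forall L, L \in PG2_lines F -> exists2 P, P \in Bset V & PG2_incident P L.
Proof.
move=> VB V0 L /(block_gen VB V0 KB) [x [t [tK nz sub]]].
exists <<V x t>>%MS; last exact: pt_le.
by apply/imsetP; exists (x, t) => //; rewrite inE /= tK nz.
Qed.

Lemma disj x t z s : inK t -> inK s -> V1 x t != 0 -> V2 z s != 0 ->
  <<V2 z s>>%MS = <<V1 x t>>%MS -> False.
Proof.
move=> tK sK n1 n2 /pt_eq [l]; rewrite /V1 /V2 rvZ => /rvP [sE gE zE].
have l0 : l != 0.
  apply/negP => /eqP l0; move: n2.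
  by rewrite /V2 sE zE l0 !mul0r G0 mulr0 addr0 rv0 eqxx.
case: (eqVneq t 0) => [t0|t0].
  move: zE gE; rewrite t0 mulr0 => z0; rewrite z0 G0 add0r => gE.
  case: (eqVneq s 0) => [s0|s0].
    move: sE; rewrite s0 => /esym/eqP; rewrite mulf_eq0 (negbTE l0) /= => /eqP x0.
    by move: n1; rewrite /V1 x0 T0 t0 rv0 eqxx.
  have x0 : x != 0.
    by apply/negP => /eqP x0; move: s0; rewrite sE x0 mulr0 eqxx.
  have Txe : T x = al * x by apply: (mulfI l0); rewrite -gE sE; ring.
  have Tx0 : T x != 0 by rewrite Txe mulf_neq0.
  have e : al^-1 = (T x)^-1 * x by rewrite Txe; field; rewrite al0 x0.
  have : T (al^-1) = 1.
    by rewrite e TZ ?mulVf //; apply: inKV; apply: inKT.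
  by rewrite Tal => /eqP; rewrite eq_sym oner_eq0.
set s' := s / t.
have s'K : inK s' by apply: inKM => //; apply: inKV.
have Gz : G z = t * G l by rewrite zE mulrC GZ.
have Tx : T x = s * T l^-1.
  have -> : x = s * l^-1 by rewrite sE; field; rewrite l0.
  by rewrite TZ.
have e1 : G l + al * s' = l * (s' * T (l^-1)).
  apply: (mulfI t0).
  have -> : t * (G l + al * s') = t * G l + al * s by rewrite /s'; field; rewrite t0.
  have -> : t * (l * (s' * T l^-1)) = l * (s * T l^-1) by rewrite /s'; field; rewrite t0.
  by rewrite -Gz gE Tx.
case: (eqVneq s' 0) => [s'0|s'0].
  move: e1; rewrite s'0 mulr0 addr0 mul0r mulr0 => /G_inj /eqP.
  by rewrite (negbTE l0).
apply: (core (w := l / s')); first by rewrite mulf_neq0 // invr_neq0.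
have Ginv : G (l / s') = s'^-1 * G l by rewrite mulrC GZ //; apply: inKV.
have Tinv : T ((l / s')^-1) = s' * T l^-1 by rewrite invfM invrK mulrC TZ.
rewrite Ginv Tinv.
have -> : G l = l * (s' * T l^-1) - al * s' by rewrite -e1; ring.
by field; rewrite s'0.
Qed.

Definition Hset := [set y | T y == 1].

Definition R1 := [set <<V1 x 1>>%MS | x : F] :|: [set <<rv y 1 0>>%MS | y in Hset]
  :|: [set <<rv 1 0 0>>%MS].

Definition R2 := [set <<V2 z 1>>%MS | z : F]
  :|: [set <<rv 0 (rho + al * be / y)%R 1>>%MS | y in Hset]
  :|: [set <<rv 0 rho 1>>%MS].

Lemma card_R (f : F -> 'M[F]_3) (g : F -> 'M[F]_3) (c : 'M[F]_3) :
  (#|[set f x | x : F] :|: [set g y | y in Hset] :|: [set c]| <= q ^ h + q ^ h.-1 + 1)%N.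
Proof.
apply: leq_trans (leq_card_setU _ _) _; rewrite cards1 leq_add2r.
apply: leq_trans (leq_card_setU _ _) _; apply: leq_add.
  by apply: leq_trans (leq_imset_card _ _) _; rewrite ?cardsT cardF.
apply: leq_trans (leq_imset_card _ _) _.
apply: leq_trans (card_Tfib 1) _; exact: card_kerset.
Qed.

Lemma B1_sub : Bset V1 \subset R1.
Proof.
apply/subsetP => P /imsetP [[x t]]; rewrite inE /= => /andP [tK n1] ->.
case: (eqVneq t 0) => [t0|t0].
  case: (eqVneq (T x) 0) => [Tx0|Tx0].
    have x0 : x != 0 by apply: contraNneq n1 => ->; rewrite /V1 T0 t0 rv0.
    apply/setUP; right; rewrite in_set1; apply/eqP.
    by rewrite -[RHS](pt_scale (rv 1 0 0) x0) rvZ /V1 Tx0 t0 mulr1 mulr0.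
  apply/setUP; left; apply/setUP; right; apply/imsetP; exists ((T x)^-1 * x).
    by rewrite inE TZ ?mulVf //; apply: inKV; apply: inKT.
  by rewrite -[RHS](pt_scale _ Tx0) rvZ mulVKf // mulr1 mulr0 /V1 t0.
apply/setUP; left; apply/setUP; left; apply/imsetP; exists (t^-1 * x) => //.
by rewrite -[RHS](pt_scale _ t0) /V1 rvZ TZ ?inKV // !mulVKf // mulr1.
Qed.

Lemma B2_sub : Bset V2 \subset R2.
Proof.
apply/subsetP => P /imsetP [[z s]]; rewrite inE /= => /andP [sK n2] ->.
case: (eqVneq s 0) => [s0|s0]; last first.
  apply/setUP; left; apply/setUP; left; apply/imsetP; exists (s^-1 * z) => //.
  rewrite -[RHS](pt_scale _ s0) /V2 rvZ (GZ _ (inKV sK)) mulVKf // mulr1.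
  by congr (<<rv _ _ _>>%MS); field.
have z0 : z != 0.
  by apply: contraNneq n2 => ->; rewrite /V2 s0 G0 mulr0 addr0 rv0.
case: (eqVneq (T (be * z)) 0) => [j0|j0].
  apply/setUP; right; rewrite in_set1; apply/eqP.
  by rewrite -[RHS](pt_scale (rv 0 rho 1) z0) rvZ /V2 /G s0 j0 !mulr0 !addr0 mulr1 mulrC.
have be0 : be != 0 by apply: contraNneq j0 => ->; rewrite mul0r T0.
apply/setUP; left; apply/setUP; right; apply/imsetP.
exists ((T (be * z))^-1 * (be * z)).
  by rewrite inE (TZ _ (inKV (inKT _))) mulVf.
rewrite -[RHS](pt_scale _ z0) rvZ /V2 /G s0 !mulr0 addr0 mulr1.
by congr (<<rv _ _ _>>%MS); field; rewrite be0 z0 j0.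
Qed.

Lemma params_main : exists B : {set 'M[F]_3},
  t_fold_blocking_set 2 B /\ #|B| = (2 * (q ^ h + q ^ h.-1 + 1))%N.
Proof.
set B0 := Bset V1 :|: Bset V2.
have sub0 : B0 \subset PG2_points F by rewrite subUset !Bset_sub.
have c0 : (#|B0| <= 2 * (q ^ h + q ^ h.-1 + 1))%N.
  apply: leq_trans (leq_card_setU _ _) _; rewrite mul2n -addnn.
  apply: leq_add; apply: leq_trans (card_R _ _ _).
    exact: subset_leq_card B1_sub.
  exact: subset_leq_card B2_sub.
have cP : (2 * (q ^ h + q ^ h.-1 + 1) <= #|PG2_points F|)%N.
  apply: leq_trans (card_points F); rewrite cardF.
  have Qm : (q ^ h = q * q ^ h.-1)%N by rewrite -expnS prednK // (leq_trans _ h2).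
  have m2 : (2 <= q ^ h.-1)%N.
    apply: leq_trans q2 _; rewrite -{1}(expn1 q) leq_exp2l //.
    by rewrite -ltnS prednK // (leq_trans _ h2).
  rewrite Qm; move: (q ^ h.-1)%N m2 => m m2; nia.
have [B [B0B BP cB]] := pad sub0 c0 cP.
exists B; split => //; split => // L Lin.
have [P1 P1in P1L] := Bset_block V1B V1_0 Lin.
have [P2 P2in P2L] := Bset_block V2B V2_0 Lin.
have ne : P1 != P2.
  apply/negP => /eqP E; move: P1in P2in; rewrite E.
  move=> /imsetP [[x t]]; rewrite inE /= => /andP [tK n1] ->.
  move=> /imsetP [[z s]]; rewrite inE /= => /andP [sK n2] E2.
  exact: (disj tK sK n1 n2 (esym E2)).
have sub : [set P1; P2] \subset [set P in B | PG2_incident P L].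
  apply/subsetP => P; rewrite !inE => /orP [] /eqP ->; rewrite ?P1L ?P2L andbT;
  apply: (subsetP B0B); rewrite !inE ?P1in ?P2in ?orbT //.
by apply: leq_trans (subset_leq_card sub); rewrite cards2 ne.
Qed.

End Params.

Lemma main_sec : exists B : {set 'M[F]_3},
  t_fold_blocking_set 2 B /\ #|B| = (2 * (q ^ h + q ^ h.-1 + 1))%N.
Proof.
have [a [a0 Ta]] := exists_a.
have [y0 Ty0] := exists_y0.
pose al := a^-1.
have al0 : al != 0 by rewrite invr_eq0.
have Tal : T al^-1 = 0 by rewrite invrK.
pose rho := al * y0.
have Trho : T (rho / al) = 1 by rewrite /rho mulrC mulKf.
have rK : ~~ inK rho.
  apply/negP => rK.
  have : T (rho / al) = rho * T al^-1 by rewrite TZ.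
  by rewrite Tal mulr0 Trho => /eqP; rewrite oner_eq0.
have [be Hbe] := exists_beta al0 rK.
exact: (@params_main al rho be al0 Tal Trho Hbe).
Qed.

End Tr.

Local Close Scope ring_scope.

Theorem corollary3p6 (q h : nat) (F : finFieldType) :
  is_prime_power q -> (2 <= h)%N -> #|F| = (q ^ h)%N ->
  exists B : {set 'M[F]_3},
    @t_fold_blocking_set F 2 B /\ #|B| = (2 * (q ^ h + q ^ h.-1 + 1))%N.
Proof.
move=> [p [k [pp [k0 qE]]]] h2 cF.
have q2 : (2 <= q)%N.
  rewrite qE; apply: leq_trans (prime_gt1 pp) _.
  by rewrite -{1}(expn1 p) leq_pexp2l // prime_gt0.
have pc : p \in [pchar F]%R.
  by apply: (@card_finPcharP F p (k * h)); rewrite // cF qE expnM.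
have frobD : forall (x y : F) i, ((x + y) ^+ (q ^ i) = x ^+ (q ^ i) + y ^+ (q ^ i))%R.
  move=> x y i; apply: exprDn_pchar.
  by rewrite qE -expnM pnatX pnatE // pc.
exact: (main_sec frobD cF q2 h2).
Qed.
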